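(* Fix $\xi\in[0,0.13]$ and let $y_i\in[\cos(2\pi/9),1)$ for all $i\in\{2,3,5,6\}$. Then for any $j\in\{2,3,5,6\}$ with $y_j\ge\max\{y_{j'},\cos(2\pi/10)\}$, one has $\frac{\partial\psi_\xi}{\partial y_j}(\delta,y_2,y_3,y_5,y_6)\ge0$ for all $\delta\in[0,0.13]$.
   Context: Pairing: $2'=6$, $3'=5$, $5'=3$, $6'=2$. For $\xi\ge0$, $y\in(0,1)$: $\eta_\xi(y)=\frac{-2-5y+(1+\xi)^2+\sqrt{(2+5y-(1+\xi)^2)^2+4(2+y)(1-y)(1+\xi)^2}}{2+y}$ (the positive root of $(2+y)\delta^2+2(2+5y-(1+\xi)^2)\delta-4(1-y)(1+\xi)^2$). Let $b(y)=\frac{16}{y+1}-7$, $c_n=\cos(2\pi/n)$, $\beta(y)=b(y)$ on $[c_{10},1]$ and $\beta(y)=\frac{(2-b(c_{10}))b(y)-(2-b(c_9))b(c_{10})}{b(c_9)-b(c_{10})}$ on $[c_9,c_{10}]$. Define $$G(\delta,\eta_2,\eta_3,\eta_5,\eta_6,\beta_2,\beta_3,\beta_5,\beta_6)=\frac{1+\dfrac{\delta[(1+\eta_2)(1+\eta_5)+(1+\eta_3)(1+\eta_6)]-2\delta(\delta+2)}{(2+\eta_2+\eta_6)(2+\eta_3+\eta_5)}}{\sqrt{1+\dfrac{\delta^2+2(1+\beta_2\beta_6)\delta}{(2+\eta_2+\eta_6)^2}}\sqrt{1+\dfrac{\delta^2+2(1+\beta_3\beta_5)\delta}{(2+\eta_3+\eta_5)^2}}}$$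 and $\psi_\xi(\delta,y_2,y_3,y_5,y_6)=G(\delta,\eta_\xi(y_2),\eta_\xi(y_3),\eta_\xi(y_5),\eta_\xi(y_6),\beta(y_2),\beta(y_3),\beta(y_5),\beta(y_6))$. *)

(* Defs.v *)
From Stdlib Require Import Reals.
From Coquelicot Require Import Coquelicot.
Open Scope R_scope.

Inductive idx : Type := I2 | I3 | I5 | I6.

Definition pair_idx (i : idx) : idx :=
  match i with I2 => I6 | I3 => I5 | I5 => I3 | I6 => I2 end.

Definition eta (xi y : R) : R :=
  (-2 - 5 * y + (1 + xi) ^ 2
   + sqrt ((2 + 5 * y - (1 + xi) ^ 2) ^ 2 + 4 * (2 + y) * (1 - y) * (1 + xi) ^ 2))
  / (2 + y).

Definition b (y : R) : R := 16 / (y + 1) - 7.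

Definition c (n : nat) : R := cos (2 * PI / INR n).

(* beta(y) = b(y) on [c10,1], the affine-in-b interpolation on [c9,c10]
   (the two formulas agree at y = c10). *)
Definition beta (y : R) : R :=
  if Rle_dec (c 10) y then b y
  else ((2 - b (c 10)) * b y - (2 - b (c 9)) * b (c 10)) / (b (c 9) - b (c 10)).

Definition G (delta eta2 eta3 eta5 eta6 beta2 beta3 beta5 beta6 : R) : R :=
  (1 + (delta * ((1 + eta2) * (1 + eta5) + (1 + eta3) * (1 + eta6))
        - 2 * delta * (delta + 2))
       / ((2 + eta2 + eta6) * (2 + eta3 + eta5)))
  / (sqrt (1 + (delta ^ 2 + 2 * (1 + beta2 * beta6) * delta) / (2 + eta2 + eta6) ^ 2)
     * sqrt (1 + (delta ^ 2 + 2 * (1 + beta3 * beta5) * delta) / (2 + eta3 + eta5) ^ 2)).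

Definition psi (xi delta y2 y3 y5 y6 : R) : R :=
  G delta (eta xi y2) (eta xi y3) (eta xi y5) (eta xi y6)
        (beta y2) (beta y3) (beta y5) (beta y6).

Definition psi_at (xi delta : R) (y : idx -> R) : R :=
  psi xi delta (y I2) (y I3) (y I5) (y I6).

Definition idx_eqb (i j : idx) : bool :=
  match i, j with
  | I2, I2 | I3, I3 | I5, I5 | I6, I6 => true
  | _, _ => false
  end.

Definition upd (y : idx -> R) (j : idx) (t : R) : idx -> R :=
  fun i => if idx_eqb i j then t else y i.

(* l is the partial derivative of psi_xi in y_j at y, taken within the
   region {y_j >= cos(2pi/10)} (where beta = b):  the limit of the difference
   quotient as t -> y_j, t <> y_j, t >= c10.  For y_j > c10 this is the usual
   two-sided partial derivative; at y_j = c10 it is the right derivative. *)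
Definition is_partial_psi (xi delta : R) (y : idx -> R) (j : idx) (l : R) : Prop :=
  filterlim (fun t => (psi_at xi delta (upd y j t) - psi_at xi delta y) / (t - y j))
            (within (fun t => c 10 <= t) (locally' (y j))) (locally l).

(* Main.v *)
Require Import Defs.
From Stdlib Require Import Reals Lra Psatz.
From Coquelicot Require Import Coquelicot.
Open Scope R_scope.

Lemma polyF0 (a d : R) : 0 <= a <= 0.26 -> 0 <= d <= 0.13 ->
  0 <= ((2+a)*2+d*(a-2-2*d))*(3.9542+4*a) - 0.66*(4+2*d)*((2+a)*(2+a)+6.13*d).
Proof. intros [? ?] [? ?].
assert (0 <= a*d) by nra. assert (a*d <= 0.26*d) by nra. assert (d*d <= 0.13*d) by nra.
assert (0<= a*a) by nra. assert (a*d*d <= 0.26*0.13*d) by nra.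
nra. Qed.
Lemma polyF (a s d : R) : 0 <= a <= 0.26 -> 0 <= s <= 0.26 -> 0 <= d <= 0.13 ->
  0 <= ((2+a)*(2+s)+d*(2+a-4+s-2*d))*(4*(2+a)-4.0458) - 0.66*(4+2*d+1.13*s)*((2+a)*(2+a)+6.13*d).
Proof. intros Ha Hs Hd. pose proof (polyF0 a d Ha Hd).
 assert (0 <= s * ( (2+a+d)*(3.9542+4*a) - 0.66*1.13*((2+a)*(2+a)+6.13*d))).
 { apply Rmult_le_pos. lra. destruct Ha, Hd. nra. }
 nra. Qed.

Lemma keyT d e2 e3 e5 e6 b2 b6 u v :
  0 <= d <= 0.13 -> 0 <= e2 <= 0.13 -> 0 <= e3 <= 0.13 -> 0 <= e5 <= 0.13 -> 0 <= e6 <= 0.13 ->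
  1 <= b2 <= 2 -> 1 <= b6 <= 2 -> 0 <= u <= 0.66 -> 4 <= v ->
  0 <= ((2+e2+e6)*(2+e3+e5) + d*((1+e2)*(1+e5)+(1+e3)*(1+e6)) - 2*d*(d+2))
       * (b6*v*(2+e2+e6) - (d+2+2*b2*b6)*u)
     - u*((1+e6)*(e5-e3)+2*d+4)*((2+e2+e6)^2 + (d^2+2*(1+b2*b6)*d)).
Proof.
intros Hd H2 H3 H5 H6 Hb2 Hb6 Hu Hv.
set (A := 2+e2+e6). set (s := e3+e5).
set (NAB := (2+e2+e6)*(2+e3+e5) + d*((1+e2)*(1+e5)+(1+e3)*(1+e6)) - 2*d*(d+2)).
set (K := (1+e6)*(e5-e3)+2*d+4).
assert (HL1 : A*(2+s)+d*(A-4+s-2*d) <= NAB).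
{ unfold NAB, A, s. assert (0 <= d*(e2*e5+e3*e6)) by (apply Rmult_le_pos; nra). nra. }
assert (HA: 2 <= A <= 2.26) by (unfold A; lra).
assert (Hs: 0 <= s <= 0.26) by (unfold s; lra).
assert (HL1p : 3.7 <= A*(2+s)+d*(A-4+s-2*d)).
{ assert (4 <= A*(2+s)) by nra. assert (-0.2938 <= d*(A-4+s-2*d)) by nra. lra. }
assert (HK : 0 <= K <= 4+2*d+1.13*s) by (unfold K, s; nra).
assert (HW : b6*(4*A-4*u) - 2.13*u <= b6*v*A - (d+2+2*b2*b6)*u).
{ assert (0 <= (v-4)*(b6*A)) by (apply Rmult_le_pos; nra).
  assert (0 <= (2-b2)*(b6*u)) by (apply Rmult_le_pos; nra).
  assert (0 <= (0.13-d)*u) by (apply Rmult_le_pos; nra). nra. }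
assert (HQ : (2+e2+e6)^2 + (d^2+2*(1+b2*b6)*d) <= A^2 + d*(2.13+4*b6)).
{ unfold A. assert (0 <= (2-b2)*(b6*d)) by (apply Rmult_le_pos; nra). nra. }
assert (T1 : NAB * (b6*(4*A-4*u) - 2.13*u) - u*K*(A^2 + d*(2.13+4*b6)) <=
   NAB * (b6*v*A - (d+2+2*b2*b6)*u) - u*K*((2+e2+e6)^2 + (d^2+2*(1+b2*b6)*d))).
{ assert (NAB * (b6*(4*A-4*u) - 2.13*u) <= NAB * (b6*v*A - (d+2+2*b2*b6)*u)).
  { apply Rmult_le_compat_l; lra. }
  assert (u*K*((2+e2+e6)^2 + (d^2+2*(1+b2*b6)*d)) <= u*K*(A^2 + d*(2.13+4*b6))).
  { apply Rmult_le_compat_l. apply Rmult_le_pos; lra. exact HQ. }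
  lra. }
assert (C1 : 0 <= (b6-1)*(NAB*(4*A-4*u) - 4*d*u*K)).
{ apply Rmult_le_pos. lra.
  assert (3.7*5.36 <= NAB*(4*A-4*u)) by nra.
  assert (d*u*K <= 0.13*0.66*4.56).
  { assert (u*K <= 0.66*4.56) by (apply Rmult_le_compat; lra).
    assert (0 <= u*K) by (apply Rmult_le_pos; lra).
    replace (d*u*K) with (d*(u*K)) by ring.
    assert (d*(u*K) <= 0.13*(0.66*4.56)) by (apply Rmult_le_compat; lra). lra. }
  lra. }
assert (T3 : (A*(2+s)+d*(A-4+s-2*d))*(4*A-4.0458) - 0.66*(4+2*d+1.13*s)*(A*A+6.13*d)
   <= NAB*(4*A-6.13*u) - u*K*(A^2+6.13*d)).
{ assert ((A*(2+s)+d*(A-4+s-2*d))*(4*A-4.0458) <= NAB*(4*A-6.13*u)).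
  { apply Rmult_le_compat; lra. }
  assert (u*K*(A^2+6.13*d) <= 0.66*(4+2*d+1.13*s)*(A*A+6.13*d)).
  { replace (A^2) with (A*A) by ring.
    assert (0 <= A*A) by (apply Rmult_le_pos; lra).
    apply Rmult_le_compat. apply Rmult_le_pos; lra. lra.
    apply Rmult_le_compat; lra. lra. }
  lra. }
pose proof (polyF (A-2) s d ltac:(lra) ltac:(unfold s; lra) Hd) as PF.
replace (2 + (A-2)) with A in PF by ring.
fold NAB K.
assert (NAB * (b6*(4*A-4*u) - 2.13*u) - u*K*(A^2 + d*(2.13+4*b6)) =
   (b6-1)*(NAB*(4*A-4*u) - 4*d*u*K) + (NAB*(4*A-6.13*u) - u*K*(A^2+6.13*d))) by lra.
enough (HG : 0 <= NAB * (b6*v*A - (d+2+2*b2*b6)*u) - u*K*((2+e2+e6)^2 + (d^2+2*(1+b2*b6)*d))) by exact HG.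
lra.
Qed.

Definition Dq xi t := (2 + 5*t - (1+xi)^2)^2 + 4*(2+t)*(1-t)*(1+xi)^2.
Definition Dd xi t := 10*(2+5*t-(1+xi)^2) - 4*(1+xi)^2*(1+2*t).
Definition etad xi t := ((-5 + Dd xi t/(2*sqrt(Dq xi t)))*(2+t) - (-2-5*t+(1+xi)^2+sqrt(Dq xi t)))/(2+t)^2.

Lemma Dq_der xi t : is_derive (Dq xi) t (Dd xi t).
Proof. unfold Dq, Dd. auto_derive; [exact I | ring]. Qed.

Lemma is_derive_eq (f : R -> R) x l1 l2 : is_derive f x l1 -> l1 = l2 -> is_derive f x l2.
Proof. intros H ->; exact H. Qed.

Lemma eta_der xi t : 0 < Dq xi t -> -2 < t -> is_derive (fun t => eta xi t) t (etad xi t).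
Proof.
intros HD Ht.
apply is_derive_ext with (f := fun t => (-2 - 5*t + (1+xi)^2 + sqrt (Dq xi t)) / (2+t)).
{ intros; reflexivity. }
eapply is_derive_eq.
{ apply (is_derive_div (fun t => -2 - 5*t + (1+xi)^2 + sqrt (Dq xi t)) (fun t => 2+t)); [ | | simpl; lra].
  - apply (is_derive_plus (fun t => -2 - 5*t + (1+xi)^2) (fun t => sqrt (Dq xi t))).
    + auto_derive; [exact I | reflexivity]. 
    + apply is_derive_sqrt; [apply Dq_der | exact HD].
  - auto_derive; [exact I | reflexivity]. }
unfold etad. simpl. unfold plus; simpl. assert (sqrt (Dq xi t) > 0) by (apply sqrt_lt_R0; exact HD). field. split; lra.
Qed.

Lemma s_bounds xi : 0 <= xi <= 0.13 -> 1 <= (1+xi)^2 <= 1.2769.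
Proof. intros. nra. Qed.

Lemma poly_M xi t : 0 <= xi <= 0.13 -> 0.765 <= t <= 1 ->
  Dq xi t <= (0.13*(2+t) + (2+5*t-(1+xi)^2))^2.
Proof. intros Hx Ht. pose proof (s_bounds xi Hx). unfold Dq. set (s := (1+xi)^2) in *.
  assert (0 <= (1-t)*(1.2769 - s)) by nra.
  assert (0 <= 0.26*(2+5*t-s)+0.0169*(2+t) - 4*(1-t)*s) by nra.
  nra. Qed.

Lemma poly_Dd xi t : 0 <= xi <= 0.13 -> 0.765 <= t <= 1 ->
  2*(0.13*(2+t) + (2+5*t-(1+xi)^2))*(5.13 - 0.66*(2+t)) <= Dd xi t.
Proof. intros Hx Ht. pose proof (s_bounds xi Hx). unfold Dd. set (s := (1+xi)^2) in *.
  assert (0 <= (1-t)*(1.2769 - s)) by nra.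
  assert (0 <= (t-0.765)*(1.2769 - s)) by nra.
  assert (0 <= (1-t)*(s-1)) by nra.
  assert (0 <= (t-0.765)*(s-1)) by nra.
  nra. Qed.

Lemma r_bounds xi t : 0 <= xi <= 0.13 -> 0.765 <= t <= 1 ->
  0 < 2+5*t-(1+xi)^2 <= sqrt (Dq xi t) /\ sqrt (Dq xi t) <= 0.13*(2+t) + (2+5*t-(1+xi)^2).
Proof. intros Hx Ht. pose proof (s_bounds xi Hx).
  assert (HL : 0 < 2+5*t-(1+xi)^2) by lra.
  split; [split; [exact HL|] |].
  - rewrite <- (sqrt_pow2 (2+5*t-(1+xi)^2)) by lra. apply sqrt_le_1_alt.
    unfold Dq. assert (0 <= 4*(2+t)*(1-t)*(1+xi)^2).
    { apply Rmult_le_pos; [|lra]. apply Rmult_le_pos; lra. }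
    lra.
  - rewrite <- (sqrt_pow2 (0.13*(2+t) + (2+5*t-(1+xi)^2))) by lra. apply sqrt_le_1_alt.
    apply poly_M; assumption.
Qed.

Lemma Dq_pos xi t : 0 <= xi <= 0.13 -> 0.765 <= t <= 1 -> 0 < Dq xi t.
Proof. intros Hx Ht. pose proof (s_bounds xi Hx). unfold Dq.
  assert (0 <= 4*(2+t)*(1-t)*(1+xi)^2).
  { apply Rmult_le_pos; [|lra]. apply Rmult_le_pos; lra. }
  assert (0 < 2+5*t-(1+xi)^2) by lra. nra. Qed.

Lemma eta_bounds xi t : 0 <= xi <= 0.13 -> 0.765 <= t <= 1 -> 0 <= eta xi t <= 0.13.
Proof. intros Hx Ht. destruct (r_bounds xi t Hx Ht) as [[HL H1] H2].
  assert (E : eta xi t * (2+t) = sqrt (Dq xi t) - (2+5*t-(1+xi)^2)).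
  { unfold eta, Dq. field. lra. }
  split; nra.
Qed.

Lemma etad_bounds xi t : 0 <= xi <= 0.13 -> 0.765 <= t <= 1 -> -0.66 <= etad xi t <= 0.
Proof. intros Hx Ht. destruct (r_bounds xi t Hx Ht) as [[HL H1] H2].
  pose proof (eta_bounds xi t Hx Ht) as He.
  pose proof (poly_Dd xi t Hx Ht) as HP.
  set (r := sqrt (Dq xi t)) in *.
  assert (Hr : 0 < r) by lra.
  set (w := Dd xi t / (2*r)).
  assert (Hw : w * (2*r) = Dd xi t) by (unfold w; field; lra).
  assert (Eq : etad xi t * (2+t) = -5 + w - eta xi t).
  { assert (Eeta : eta xi t = (-2-5*t+(1+xi)^2 + r)/(2+t)) by reflexivity. rewrite Eeta. unfold etad, w. fold r. clearbody w r. field. lra. }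
  assert (Hw1 : w <= 5).
  { assert (Dd xi t <= 10 * r).
    { unfold Dd. pose proof (s_bounds xi Hx). nra. }
    nra. }
  assert (Hw2 : 5.13 - 0.66*(2+t) <= w).
  { assert (2*r*(5.13 - 0.66*(2+t)) <= 2*(0.13*(2+t) + (2+5*t-(1+xi)^2))*(5.13 - 0.66*(2+t))).
    { apply Rmult_le_compat_r; lra. }
    nra. }
  split; nra.
Qed.

Definition NumF xi d e3 e5 e6 t := 1 + (d*((1+eta xi t)*(1+e5)+(1+e3)*(1+e6)) - 2*d*(d+2))/((2+eta xi t+e6)*(2+e3+e5)).
Definition XF xi d e6 b6 t := 1 + (d^2 + 2*(1+b t*b6)*d)/(2+eta xi t+e6)^2.

Lemma NumF_der xi d e3 e5 e6 x : 0 <= xi <= 0.13 -> 0.765 <= x <= 1 -> 0 <= e3 -> 0 <= e5 -> 0 <= e6 ->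
  is_derive (NumF xi d e3 e5 e6) x
   (d*etad xi x*((1+e6)*(e5-e3)+2*d+4)/((2+eta xi x+e6)^2*(2+e3+e5))).
Proof.
intros Hx Ht H3 H5 H6.
pose proof (eta_der xi x (Dq_pos xi x Hx Ht) ltac:(lra)) as HD.
pose proof (eta_bounds xi x Hx Ht) as He.
assert (HE : ex_derive (fun t => eta xi t) x) by (eexists; exact HD).
unfold NumF. auto_derive.
- repeat split; try exact HE. apply Rmult_integral_contrapositive; split; lra.
- replace (Derive (fun x0 : R => eta xi x0) x) with (etad xi x) by (symmetry; apply is_derive_unique; exact HD). field. split; lra.
Qed.

Lemma XF_der xi d e6 b6 x : 0 <= xi <= 0.13 -> 0.765 <= x <= 1 -> 0 <= e6 ->
  is_derive (XF xi d e6 b6) x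
   ((2*d*b6*(-16/(x+1)^2)*(2+eta xi x+e6) - 2*(d^2+2*(1+b x*b6)*d)*etad xi x)/(2+eta xi x+e6)^3).
Proof.
intros Hx Ht H6.
pose proof (eta_der xi x (Dq_pos xi x Hx Ht) ltac:(lra)) as HD.
pose proof (eta_bounds xi x Hx Ht) as He.
assert (HE : ex_derive (fun t => eta xi t) x) by (eexists; exact HD).
unfold XF, b. auto_derive.
1: { repeat split; try exact HE; try lra; repeat apply Rmult_integral_contrapositive_currified; lra. }
all: replace (Derive (fun x0 : R => eta xi x0) x) with (etad xi x) by (symmetry; apply is_derive_unique; exact HD). field. split; lra.
Qed.



Lemma sign_alg d e2 e3 e5 e6 b2 b6 ed bd :
  0 <= d <= 0.13 -> 0 <= e2 <= 0.13 -> 0 <= e3 <= 0.13 -> 0 <= e5 <= 0.13 -> 0 <= e6 <= 0.13 ->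
  1 <= b2 <= 2 -> 1 <= b6 <= 2 -> -0.66 <= ed <= 0 -> bd <= -4 ->
  0 <= 2 * (d*ed*((1+e6)*(e5-e3)+2*d+4)/((2+e2+e6)^2*(2+e3+e5)))
           * (1 + (d^2 + 2*(1+b2*b6)*d)/(2+e2+e6)^2)
       - (1 + (d*((1+e2)*(1+e5)+(1+e3)*(1+e6)) - 2*d*(d+2))/((2+e2+e6)*(2+e3+e5)))
         * ((2*d*b6*bd*(2+e2+e6) - 2*(d^2+2*(1+b2*b6)*d)*ed)/(2+e2+e6)^3).
Proof.
intros Hd H2 H3 H5 H6 Hb2 Hb6 Hed Hbd.
pose proof (keyT d e2 e3 e5 e6 b2 b6 (-ed) (-bd) Hd H2 H3 H5 H6 Hb2 Hb6 ltac:(lra) ltac:(lra)) as HT.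
set (T := ((2+e2+e6)*(2+e3+e5) + d*((1+e2)*(1+e5)+(1+e3)*(1+e6)) - 2*d*(d+2))
       * (b6*(-bd)*(2+e2+e6) - (d+2+2*b2*b6)*(-ed))
     - (-ed)*((1+e6)*(e5-e3)+2*d+4)*((2+e2+e6)^2 + (d^2+2*(1+b2*b6)*d))) in HT.
assert (HA : 0 < 2+e2+e6) by lra. assert (HB : 0 < 2+e3+e5) by lra.
match goal with |- 0 <= ?E => assert (Eq : E = 2*d/((2+e2+e6)^4*(2+e3+e5)) * T) end.
{ unfold T. field. lra. }
rewrite Eq. apply Rmult_le_pos; [|exact HT].
apply Rmult_le_pos; [lra|]. left. apply Rinv_0_lt_compat. apply Rmult_lt_0_compat; [|lra].
apply pow_lt; lra.
Qed.

Lemma is_derive_mulc (f : R -> R) x df c : is_derive f x df -> is_derive (fun t => f t * c) x (df * c).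
Proof.
intros H. eapply is_derive_eq.
- apply (is_derive_mult f (fun _ => c) x df zero H (is_derive_const c x)).
  intros; apply Rmult_comm.
- unfold plus, mult, zero; simpl. ring.
Qed.

Lemma b_bounds x : 0.8 <= x <= 1 -> 1 <= b x <= 2.
Proof. intros Hx. unfold b. assert (E : (16/(x+1) - 7 + 7) * (x+1) = 16) by (field; lra).
  split; nra. Qed.

Lemma core xi d e3 e5 e6 b3 b5 b6 x :
  0 <= xi <= 0.13 -> 0 <= d <= 0.13 -> 0 <= e3 <= 0.13 -> 0 <= e5 <= 0.13 -> 0 <= e6 <= 0.13 ->
  1 <= b3 <= 2 -> 1 <= b5 <= 2 -> 1 <= b6 <= 2 -> 0.8 <= x <= 1 ->
  exists l, is_derive (fun t => G d (eta xi t) e3 e5 e6 (b t) b3 b5 b6) x l /\ 0 <= l.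
Proof.
intros Hx Hd H3 H5 H6 Hb3 Hb5 Hb6 Ht.
assert (Ht' : 0.765 <= x <= 1) by lra.
pose proof (eta_bounds xi x Hx Ht') as He.
pose proof (etad_bounds xi x Hx Ht') as Hed.
pose proof (b_bounds x Ht) as Hbx.
set (Y := 1 + (d^2+2*(1+b3*b5)*d)/(2+e3+e5)^2).
assert (HY : 1 <= Y).
{ unfold Y. assert (0 <= (d^2+2*(1+b3*b5)*d)/(2+e3+e5)^2); [|lra].
  apply Rdiv_le_0_compat; [|apply pow_lt; lra]. assert (0 <= b3*b5) by nra. nra. }
assert (HX : 1 <= XF xi d e6 b6 x).
{ unfold XF. assert (0 <= (d^2+2*(1+b x*b6)*d)/(2+eta xi x+e6)^2); [|lra].
  apply Rdiv_le_0_compat; [|apply pow_lt; lra]. assert (0 <= b x*b6) by nra. nra. }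
set (s2 := sqrt Y). assert (Hs2 : 0 < s2) by (apply sqrt_lt_R0; lra).
set (sq := sqrt (XF xi d e6 b6 x)). assert (Hsq : 0 < sq) by (apply sqrt_lt_R0; lra).
assert (Hsq2 : sq * sq = XF xi d e6 b6 x) by (apply sqrt_sqrt; lra).
pose proof (NumF_der xi d e3 e5 e6 x Hx Ht' ltac:(lra) ltac:(lra) ltac:(lra)) as HN.
pose proof (XF_der xi d e6 b6 x Hx Ht' ltac:(lra)) as HXd.
pose proof (is_derive_sqrt _ _ _ HXd ltac:(lra)) as HS.
pose proof (is_derive_mulc _ _ _ s2 HS) as HS2.
pose proof (is_derive_div _ _ _ _ _ HN HS2) as HF.
simpl in HF. fold sq in HF.
assert (Hne : sq * s2 <> 0) by (apply Rgt_not_eq; apply Rmult_lt_0_compat; lra).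
specialize (HF Hne).
eexists; split.
{ eapply is_derive_ext; [|exact HF]. intros t. reflexivity. }
set (ND := d * etad xi x * ((1 + e6) * (e5 - e3) + 2 * d + 4) / ((2 + eta xi x + e6) ^ 2 * (2 + e3 + e5))).
set (XD := (2 * d * b6 * (-16 / (x + 1) ^ 2) * (2 + eta xi x + e6) -
        2 * (d ^ 2 + 2 * (1 + b x * b6) * d) * etad xi x) / (2 + eta xi x + e6) ^ 3).
match goal with |- 0 <= ?E => assert (Eq : E = s2/(2*sq*(sq*s2)^2) * (2*ND*(sq*sq) - NumF xi d e3 e5 e6 x * XD)) end.
{ unfold ND, XD. field. split; lra. }
rewrite Eq, Hsq2. apply Rmult_le_pos.
{ apply Rdiv_le_0_compat; [lra|]. apply Rmult_lt_0_compat; [lra|]. apply pow_lt. apply Rmult_lt_0_compat; lra. }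
unfold ND, XD, XF, NumF.
apply sign_alg; try lra.
assert (4 <= 16/(x+1)^2).
{ apply Rmult_le_reg_r with ((x+1)^2). apply pow_lt; lra.
  unfold Rdiv. rewrite Rmult_assoc, Rinv_l. nra. apply pow_nonzero; lra. }
unfold Rdiv in *. lra.
Qed.

Lemma PI_ub : PI <= 3.1421.
Proof.
  destruct (PI_2_3_7_ineq 1) as [_ H].
  unfold sum_f_R0, tg_alt, PI_2_3_7_tg, Ratan_seq in H. simpl in H. lra.
Qed.

Lemma cos_lower (a a0 lb : R) : 0 <= a <= a0 -> a0 <= 1 -> cos_approx a0 3 >= lb -> cos a >= lb.
Proof.
intros Ha Ha0 Hlb.
pose proof PI2_1. pose proof PI_RGT_0.
assert (cos a0 <= cos a).
{ destruct (Req_dec a a0) as [->|Hne]; [lra|].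
  left. apply cos_decreasing_1; lra. }
destruct (cos_bound a0 1) as [Hc _]; try lra.
simpl in Hc. lra.
Qed.

Lemma c9_lb : c 9 >= 0.7655.
Proof.
unfold c. replace (INR 9) with 9 by (simpl; ring).
pose proof PI_ub. pose proof PI_RGT_0.
apply (cos_lower _ 0.6983); try lra.
unfold cos_approx, cos_term, sum_f_R0. simpl. lra.
Qed.

Lemma c10_lb : c 10 >= 0.8.
Proof.
unfold c. replace (INR 10) with 10 by (simpl; ring).
pose proof PI_ub. pose proof PI_RGT_0.
apply (cos_lower _ 0.6285); try lra.
unfold cos_approx, cos_term, sum_f_R0. simpl. lra.
Qed.

Lemma c10_ub : c 10 <= 1.
Proof. unfold c. apply COS_bound. Qed.

Lemma beta_bounds y : c 9 <= y < 1 -> 1 <= beta y <= 2.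
Proof.
intros Hy. pose proof c9_lb. pose proof c10_lb. pose proof c10_ub.
assert (Hb : forall z, 0.765 <= z -> z <= 1 -> (b z + 7) * (z+1) = 16).
{ intros z Hz1 Hz2. unfold b. field. lra. }
unfold beta. destruct (Rle_dec (c 10) y) as [Hc|Hc].
- pose proof (Hb y ltac:(lra) ltac:(lra)). split; nra.
- pose proof (Hb y ltac:(lra) ltac:(lra)) as E1.
  pose proof (Hb (c 10) ltac:(lra) ltac:(lra)) as E2.
  pose proof (Hb (c 9) ltac:(lra) ltac:(lra)) as E3.
  assert (b (c 10) < b y).
  { unfold b. apply Rplus_lt_compat_r. unfold Rdiv. apply Rmult_lt_compat_l; [lra|].
    apply Rinv_lt_contravar; [nra|lra]. }
  assert (b y <= b (c 9)).
  { unfold b. apply Rplus_le_compat_r. unfold Rdiv. apply Rmult_le_compat_l; [lra|].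
    apply Rinv_le_contravar; lra. }
  assert (1 <= b (c 10) <= 2) by (split; nra).
  set (D := b (c 9) - b (c 10)). assert (HD : 0 < D) by (unfold D; lra).
  set (q := ((2 - b (c 10)) * b y - (2 - b (c 9)) * b (c 10)) / D).
  assert (Eq : q * D = (2 - b (c 10)) * (b y - b (c 10)) + b (c 10) * D).
  { unfold q, D. field. fold D. lra. }
  assert (0 <= (q - b (c 10)) * D).
  { replace ((q - b (c 10)) * D) with ((2 - b (c 10)) * (b y - b (c 10))) by lra.
    apply Rmult_le_pos; lra. }
  assert (0 <= (2 - q) * D).
  { replace ((2 - q) * D) with ((2 - b (c 10)) * (b (c 9) - b y)) by (unfold D in *; lra).
    apply Rmult_le_pos; lra. }
  split; nra.
Qed.

Lemma upd_same xi d y j : psi_at xi d (upd y j (y j)) = psi_at xi d y.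
Proof. destruct j; reflexivity. Qed.

Lemma partial_of_derive xi d y j (F : R -> R) l :
  is_derive F (y j) l ->
  (forall t, c 10 <= t -> psi_at xi d (upd y j t) = F t) ->
  c 10 <= y j -> is_partial_psi xi d y j l.
Proof.
intros HF HE Hy.
apply is_derive_Reals in HF.
unfold is_partial_psi.
intros P [eps HP].
unfold filtermap, within, locally'. unfold within.
destruct (HF eps (cond_pos eps)) as [del Hdel].
exists del. intros t Ht Hne Hc.
apply HP.
change (Rabs ((psi_at xi d (upd y j t) - psi_at xi d y) / (t - y j) - l) < eps).
rewrite HE by exact Hc. rewrite <- (upd_same xi d y j), (HE (y j) Hy).
replace t with (y j + (t - y j)) at 1 by ring.
apply Hdel.
- intro Hz; apply Hne; lra.
- exact Ht.
Qed.

Definition G' d A B P c1 c2 := (1 + (d*P - 2*d*(d+2))/(A*B)) /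
  (sqrt (1 + (d^2+2*(1+c1)*d)/A^2) * sqrt (1 + (d^2+2*(1+c2)*d)/B^2)).

Lemma G_G' d a1 a2 a3 a4 p1 p2 p3 p4 :
  G d a1 a2 a3 a4 p1 p2 p3 p4 = G' d (2+a1+a4) (2+a2+a3) ((1+a1)*(1+a3)+(1+a2)*(1+a4)) (p1*p4) (p2*p3).
Proof. reflexivity. Qed.

Lemma G'_swap d A B P c1 c2 : G' d A B P c1 c2 = G' d B A P c2 c1.
Proof. unfold G'. rewrite (Rmult_comm A B). f_equal. apply Rmult_comm. Qed.

Lemma G_sym_a d a1 a2 a3 a4 p1 p2 p3 p4 :
  G d a1 a2 a3 a4 p1 p2 p3 p4 = G d a4 a3 a2 a1 p4 p3 p2 p1.
Proof. rewrite !G_G'. f_equal; ring. Qed.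

Lemma G_sym_b d a1 a2 a3 a4 p1 p2 p3 p4 :
  G d a1 a2 a3 a4 p1 p2 p3 p4 = G d a2 a1 a4 a3 p2 p1 p4 p3.
Proof. rewrite !G_G', G'_swap. f_equal; ring. Qed.

Lemma G_sym_c d a1 a2 a3 a4 p1 p2 p3 p4 :
  G d a1 a2 a3 a4 p1 p2 p3 p4 = G d a3 a4 a1 a2 p3 p4 p1 p2.
Proof. rewrite !G_G', G'_swap. f_equal; ring. Qed.

Theorem lemma4p3 :
  forall (xi : R), 0 <= xi <= 13/100 ->
  forall (y : idx -> R), (forall i, c 9 <= y i < 1) ->
  forall (j : idx), y j >= Rmax (y (pair_idx j)) (c 10) ->
  forall (delta : R), 0 <= delta <= 13/100 ->
  exists l : R, is_partial_psi xi delta y j l /\ 0 <= l.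
Proof.
intros xi Hxi y Hy j Hj d Hd.
pose proof c10_lb. pose proof c9_lb. pose proof c10_ub.
assert (Hx : 0 <= xi <= 0.13) by lra.
assert (Hd' : 0 <= d <= 0.13) by lra.
assert (Hyj : c 10 <= y j).
{ pose proof (Rmax_r (y (pair_idx j)) (c 10)). lra. }
assert (Hb : forall i, 0.765 <= y i <= 1) by (intro i; destruct (Hy i); lra).
assert (He : forall i, 0 <= eta xi (y i) <= 0.13) by (intro i; apply eta_bounds; auto).
assert (Hbe : forall i, 1 <= beta (y i) <= 2) by (intro i; apply beta_bounds; auto).
assert (Hbeq : forall t, c 10 <= t -> beta t = b t).
{ intros t Ht. unfold beta. destruct (Rle_dec (c 10) t); [reflexivity | contradiction]. }
assert (Hxj : 0.8 <= y j <= 1) by (split; [lra | apply Hb]).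
destruct j.
- destruct (core xi d (eta xi (y I3)) (eta xi (y I5)) (eta xi (y I6)) (beta (y I3)) (beta (y I5)) (beta (y I6)) (y I2)
    Hx Hd' (He I3) (He I5) (He I6) (Hbe I3) (Hbe I5) (Hbe I6) Hxj) as [l [Hl Hl0]].
  exists l; split; [|exact Hl0].
  apply (partial_of_derive xi d y I2 _ l Hl); [|exact Hyj].
  intros t Ht. cbv [psi_at psi upd idx_eqb]. rewrite (Hbeq t Ht). reflexivity.
- destruct (core xi d (eta xi (y I2)) (eta xi (y I6)) (eta xi (y I5)) (beta (y I2)) (beta (y I6)) (beta (y I5)) (y I3)
    Hx Hd' (He I2) (He I6) (He I5) (Hbe I2) (Hbe I6) (Hbe I5) Hxj) as [l [Hl Hl0]].
  exists l; split; [|exact Hl0].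
  apply (partial_of_derive xi d y I3 _ l Hl); [|exact Hyj].
  intros t Ht. cbv [psi_at psi upd idx_eqb]. rewrite (Hbeq t Ht). apply G_sym_b.
- destruct (core xi d (eta xi (y I6)) (eta xi (y I2)) (eta xi (y I3)) (beta (y I6)) (beta (y I2)) (beta (y I3)) (y I5)
    Hx Hd' (He I6) (He I2) (He I3) (Hbe I6) (Hbe I2) (Hbe I3) Hxj) as [l [Hl Hl0]].
  exists l; split; [|exact Hl0].
  apply (partial_of_derive xi d y I5 _ l Hl); [|exact Hyj].
  intros t Ht. cbv [psi_at psi upd idx_eqb]. rewrite (Hbeq t Ht). apply G_sym_c.
- destruct (core xi d (eta xi (y I5)) (eta xi (y I3)) (eta xi (y I2)) (beta (y I5)) (beta (y I3)) (beta (y I2)) (y I6)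
    Hx Hd' (He I5) (He I3) (He I2) (Hbe I5) (Hbe I3) (Hbe I2) Hxj) as [l [Hl Hl0]].
  exists l; split; [|exact Hl0].
  apply (partial_of_derive xi d y I6 _ l Hl); [|exact Hyj].
  intros t Ht. cbv [psi_at psi upd idx_eqb]. rewrite (Hbeq t Ht). apply G_sym_a.
Qed.
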